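(* Let $f\in\omega^{\subset\omega}$, let $k,n\geq 1$, and suppose $U$ is a $(k(n-1)+1)$-branching set of extensions of $f$ with $U=\bigcup_{i<k}U_i$. Then some $U_i$ contains an $n$-branching set of extensions of $f$.
   Context: $\omega^{\subset\omega}$ is the set of partial functions from $\omega$ to $\omega$ with finite domain. For $f\in\omega^{\subset\omega}$, an $n$-branching set of extensions of $f$ of length $k$ is defined by induction on $k$: of length $1$, it is a set $U$ of $n$ functions such that for some fixed $x\notin\operatorname{dom}(f)$ each $g\in U$ satisfies $f\subseteq g$ and $\operatorname{dom}(g)=\operatorname{dom}(f)\cup\{x\}$; if $U_0$ is an $n$-branching set of extensions of $f$ of length $k$ and for each $g\in U_0$, $U_g$ is an $n$-branching set of extensions of $g$ of length $1$, then $\bigcup_{g\in U_0}U_g$ is an $n$-branching set of extensions of $f$ of length $k+1$. An $n$-branching set of extensions is one of some length $k\geq1$. *)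

(* Defs.v *)
From HB Require Import structures.
From mathcomp Require Import all_boot.
From mathcomp Require Import finmap.

Set Implicit Arguments.
Unset Strict Implicit.
Unset Printing Implicit Defensive.

Local Open Scope fset_scope.
Local Open Scope fmap_scope.

(* Elements of omega^{subset omega}: finite partial functions nat -> nat. *)
Definition pfun := {fmap nat -> nat}.

Definition pfun_sub (f g : pfun) : Prop :=
  forall x v, f.[? x] = Some v -> g.[? x] = Some v.

Definition branch1 (n : nat) (f : pfun) (U : {fset pfun}) : Prop :=
  #|` U| = n /\
  exists x : nat, x \notin domf f /\
    forall g, g \in U -> pfun_sub f g /\ domf g = x |` domf f.

(* branch n f k U : U is an n-branching set of extensions of f of length k+1 *)
Fixpoint branch (n : nat) (f : pfun) (k : nat) (U : {fset pfun}) : Prop :=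
  match k with
  | 0 => branch1 n f U
  | k'.+1 =>
      exists U0 : {fset pfun}, branch n f k' U0 /\
      exists V : pfun -> {fset pfun},
        (forall g, g \in U0 -> branch1 n g (V g)) /\
        (forall h, h \in U <-> exists2 g, g \in U0 & h \in V g)
  end.

Definition nbranching (n : nat) (f : pfun) (U : {fset pfun}) : Prop :=
  exists k, branch n f k U.

(* Main.v *)
Require Import Defs.
From mathcomp Require Import all_boot.
From mathcomp Require Import finmap.
From Stdlib Require Import ClassicalEpsilon.
From mathcomp Require Import zify.
Local Open Scope fset_scope.

Lemma pigeon_sum (Ui : nat -> {fset pfun}) k : forall (U : {fset pfun}),
  (forall h, h \in U -> exists2 i, i < k & h \in Ui i) ->
  (#|` U| <= \sum_(i < k) #|` U `&` Ui i|)%N.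
Proof.
elim: k => [|k IH] U HU.
  rewrite big_ord0 leqn0 cardfs_eq0; apply/eqP/fsetP => h.
  rewrite in_fset0; apply/negbTE/negP => /HU [].
  by [].
rewrite big_ord_recr /=.
have H' : forall h, h \in U `\` Ui k -> exists2 i, i < k & h \in Ui i.
  move=> h /fsetDP [hU hn]; have [i ik hi] := HU h hU.
  exists i => //; rewrite ltnS leq_eqVlt in ik; case/orP: ik => // /eqP [Ei].
  by move: hi; rewrite Ei (negbTE hn).
have := IH _ H'.
have le1 : (\sum_(i < k) #|` (U `\` Ui k) `&` Ui i| <= \sum_(i < k) #|` U `&` Ui i|)%N.
  apply: leq_sum => i _; apply: fsubset_leq_card; apply: fsetSI; exact: fsubsetDl.
move=> le2; have le3 := leq_trans le2 le1.
rewrite cardfsD in le3.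
rewrite leq_subLR addnC in le3; exact: le3.
Qed.

Lemma sub_card (A : {fset pfun}) m : (m <= #|` A|)%N ->
  exists B : {fset pfun}, B `<=` A /\ #|` B| = m.
Proof.
elim: m => [|m IH] Hm.
  by exists fset0; rewrite fsub0set cardfs0.
have [B [BA cB]] := IH (ltnW Hm).
have : A `\` B != fset0.
  rewrite -cardfs_eq0 cardfsDS //; lia.
case/fset0Pn => x /fsetDP [xA xB].
exists (x |` B); split.
  apply/fsubsetP => y; rewrite !inE => /orP [/eqP -> // | /(fsubsetP BA) //].
by rewrite cardfsU1 xB cB.
Qed.

Section Main.
Variables (k n : nat) (hn : 1 <= n).
Let N := (k * (n - 1) + 1)%N.

Lemma base (f : pfun) (U : {fset pfun}) (Ui : nat -> {fset pfun}) :
  branch1 N f U -> (forall h, h \in U -> exists2 i, i < k & h \in Ui i) ->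
  exists i, exists W : {fset pfun},
    i < k /\ W `<=` U /\ W `<=` Ui i /\ branch1 n f W.
Proof.
move=> [cU [x [xf Hx]]] HU.
have hs := @pigeon_sum Ui k U HU.
have [/existsP [i Hi] | Hno] := boolP [exists i : 'I_k, n <= #|` U `&` Ui i|].
  have [W [WI cW]] := @sub_card _ n Hi.
  have WU : W `<=` U := fsubset_trans WI (fsubsetIl _ _).
  exists i, W; split; first exact: ltn_ord.
  split => //; split; first exact: fsubset_trans WI (fsubsetIr _ _).
  split => //; exists x; split => // g gW; apply: Hx; exact: (fsubsetP WU).
exfalso.
have : (\sum_(i < k) #|` U `&` Ui i| <= \sum_(i < k) (n - 1))%N.
  apply: leq_sum => i _; move/existsPn: Hno => /(_ i); rewrite -ltnNge; lia.
rewrite sum_nat_const card_ord /= => h2.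
have := leq_trans hs h2; rewrite cU /N; lia.
Qed.
Arguments base {f U Ui}.

Lemma step (L : nat) : forall (f : pfun) (U : {fset pfun}) (Ui : nat -> {fset pfun}),
  branch N f L U -> (forall h, h \in U -> exists2 i, i < k & h \in Ui i) ->
  exists2 i, i < k & exists2 W : {fset pfun}, W `<=` Ui i & nbranching n f W.
Proof.
elim: L => [|L IH] f U Ui.
  move=> /= HB HU; have [i [W [ik [_ [WUi HW]]]]] := base HB HU.
  by exists i => //; exists W => //; exists 0.
move=> /= [U0 [HU0 [V [HV HUV]]]] HU.
have ex : forall g, exists p : nat * {fset pfun}, g \in U0 ->
    p.1 < k /\ p.2 `<=` V g /\ p.2 `<=` Ui p.1 /\ branch1 n g p.2.
  move=> g; case: (boolP (g \in U0)) => gU0; last by exists (0, fset0).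
  have Hh : forall h, h \in V g -> exists2 i, i < k & h \in Ui i.
    by move=> h hV; apply: HU; apply/HUV; exists g.
  have [i [W [ik [WV [WU HW]]]]] := base (HV g gU0) Hh.
  by exists (i, W).
pose P g := proj1_sig (constructive_indefinite_description _ (ex g)).
have HP : forall g, g \in U0 -> (P g).1 < k /\ (P g).2 `<=` V g /\
    (P g).2 `<=` Ui (P g).1 /\ branch1 n g (P g).2.
  move=> g; exact: (proj2_sig (constructive_indefinite_description _ (ex g))).
pose Ui' i := [fset g | g in U0 & (P g).1 == i].
have [|i ik [W0 W0U HW0]] := IH f U0 Ui' HU0.
  move=> h hU0; exists (P h).1; first by case: (HP h hU0).
  by rewrite /Ui' !inE /= hU0 eqxx.
have W0U0 : forall g, g \in W0 -> g \in U0 /\ (P g).1 = i.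
  move=> g /(fsubsetP W0U); rewrite /Ui' !inE /= => /andP [-> /eqP ->] //.
exists i => //.
exists (\bigcup_(g <- W0) (P g).2).
  apply/bigfcupsP => g gW0 _; have [gU Pg] := W0U0 g gW0.
  by have [_ [_ [H _]]] := HP g gU; rewrite -Pg.
case: HW0 => m Hm; exists m.+1 => /=.
exists W0; split => //; exists (fun g => (P g).2); split.
  by move=> g gW0; have [gU _] := W0U0 g gW0; by case: (HP g gU) => _ [_ [_ H]].
move=> h; split.
  by move/bigfcupP => [g /andP [gW _] hg]; exists g.
by move=> [g gW hg]; apply/bigfcupP; exists g => //; rewrite gW.
Qed.

End Main.

Theorem mainTheorem8 (f : pfun) (k n : nat) (hk : 1 <= k) (hn : 1 <= n)
  (U : {fset pfun}) (Ui : nat -> {fset pfun}) :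
  nbranching (k * (n - 1) + 1) f U ->
  (forall h, h \in U <-> exists2 i, i < k & h \in Ui i) ->
  exists2 i, i < k & exists2 W : {fset pfun}, W `<=` Ui i & nbranching n f W.
Proof.
move=> [L HL] HU.
apply: (@step k n hn L f U Ui HL) => h hU; exact/HU.
Qed.
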